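(* Let $K=\mathbb{Q}(\rho)$, where $\rho$ is a root of $x^3-ax^2-(a+3)x-1$ with $a\equiv3$ or $21\pmod{27}$, $a>12$ and $\frac{\Delta}{27}$ square-free, where $\Delta=a^2+3a+9$. Put $g_2=\rho$, $g_3=\frac{1+\rho+\rho^2}{3}$. \begin{enumerate} \item If $\alpha=-r\rho+\rho^2$ with $1\leq r\leq\frac{a}{3}$, then $N(\alpha)\leq\frac{2a^3+9a^2+27a+27}{27}=\frac{(2a+3)\Delta}{27}$. \item If $\alpha=-(r+1)g_2+g_3$ with $0\leq r\leq\frac{a}{3}-1$, then $N(\alpha)<\frac{(2a+3)\Delta}{27}$. \end{enumerate}
   Context: $N$ denotes the norm from $K$ to $\mathbb{Q}$. *)

(* Defs.v *)
From mathcomp Require Import all_boot all_order all_algebra.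
Set Implicit Arguments. Unset Strict Implicit. Unset Printing Implicit Defensive.
Import Order.TTheory GRing.Theory Num.Theory.
Local Open Scope ring_scope.

Definition fa (a : rat) : {poly rat} :=
  'X^3 - a%:P * 'X^2 - (a + 3)%:P * 'X - 1.

(* Matrix of multiplication by rho on K, in the Q-basis (1, rho, rho^2),
   acting on row coordinate vectors: rho*1 = rho, rho*rho = rho^2,
   rho*rho^2 = 1 + (a+3) rho + a rho^2. *)
Definition rho_mx (a : rat) : 'M[rat]_3 :=
  \matrix_(i < 3, j < 3)
    nth 0 (nth [::] [:: [:: 0; 1; 0]; [:: 0; 0; 1]; [:: 1; a + 3; a]] i) j.

(* The element alpha = p(rho) of K; its norm N_{K/Q}(alpha) is the
   determinant of the Q-linear map x |-> alpha x, i.e. det (p(M_rho)). *)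
Definition normK (a : rat) (p : {poly rat}) : rat :=
  \det (horner_mx (rho_mx a) p).

Definition squarefree (n : nat) : Prop :=
  forall p : nat, prime p -> ~~ (p ^ 2 %| n)%N.

Definition Delta (a : nat) : nat := (a ^ 2 + 3 * a + 9)%N.

(* Main.v *)
Require Import Defs.
From mathcomp Require Import all_boot all_order all_algebra.
From mathcomp Require Import ring lra.
Import Order.TTheory GRing.Theory Num.Theory.
Local Open Scope ring_scope.
Lemma det3n (R : comNzRingType) (B : nat -> nat -> R) :
  \det (\matrix_(i < 3, j < 3) B i j) =
  B 0 0 * (B 1 1 * B 2 2 - B 1 2 * B 2 1)
  - B 0 1 * (B 1 0 * B 2 2 - B 1 2 * B 2 0)
  + B 0 2 * (B 1 0 * B 2 1 - B 1 1 * B 2 0).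
Proof.
rewrite (expand_det_row _ ord0) !big_ord_recl big_ord0 /cofactor.
rewrite !(expand_det_row _ ord0) !big_ord_recl !big_ord0 /cofactor !det_mx11 !mxE /=.
rewrite !expr0 !expr1 /=. ring.
Qed.

Lemma det3 (R : comNzRingType) (A : 'M[R]_3) :
  \det A = let B := fun i j : nat => A (inord i) (inord j) in
  B 0 0 * (B 1 1 * B 2 2 - B 1 2 * B 2 1)
  - B 0 1 * (B 1 0 * B 2 2 - B 1 2 * B 2 0)
  + B 0 2 * (B 1 0 * B 2 1 - B 1 1 * B 2 0).
Proof.
rewrite /= -(@det3n _ (fun i j : nat => A (inord i) (inord j))); congr (\det _); apply/matrixP => i j; rewrite mxE !inord_val //.
Qed.
Lemma p1 (a r : rat) : normK a ('X^2 - r *: 'X) = a * r^+2 + (a+3) * r + 1 - r^+3.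
Proof.
rewrite /normK -mul_polyC rmorphB !rmorphM /= horner_mx_C horner_mx_X det3 /= -!mulmxE mul_scalar_mx.
rewrite !mxE !big_ord_recl !big_ord0 !mxE /= !inordK //=.
ring.
Qed.
Lemma p2 (a c : rat) : normK a (3^-1 *: (1 + 'X + 'X^2) - c *: 'X) =
  (2*a^+2+6*a+17 + (a^+2+3*a+6)*(3*c-1) - 3*(3*c-1)^+2 - (3*c-1)^+3)/27.
Proof.
rewrite /normK -!mul_polyC rmorphB !rmorphM !rmorphD /= !rmorphM /= !horner_mx_C horner_mx_X rmorph1 det3 /= -!mulmxE !mul_scalar_mx.
rewrite !mxE !big_ord_recl !big_ord0 !mxE /= !inordK //=.
rewrite !eqxx -!val_eqE /= !inordK //=.
by field.
Qed.
Theorem lemma7p2 (a : nat) :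
  (a %% 27 = 3 \/ a %% 27 = 21)%N ->
  (12 < a)%N ->
  squarefree (Delta a %/ 27) ->
  (forall r : nat, (1 <= r)%N -> (3 * r <= a)%N ->
     normK a%:R ('X^2 - r%:R *: 'X)
       <= (2 * a%:R + 3) * (Delta a)%:R / 27) /\
  (forall r : nat, (3 * (r + 1) <= a)%N ->
     normK a%:R (3^-1 *: (1 + 'X + 'X^2) - (r%:R + 1) *: 'X)
       < (2 * a%:R + 3) * (Delta a)%:R / 27).
Proof.
move=> _ ha _.
have hA : (12 : rat) < a%:R by rewrite ltr_nat.
rewrite /Delta !natrD !natrM ?natrX.
split.
- move=> r h1 h3.
  have H1 : (1 : rat) <= r%:R by rewrite ler1n.
  have H3 : 3 * (r%:R : rat) <= a%:R by rewrite -natrM ler_nat.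
  rewrite p1.
  set x : rat := a%:R; set y : rat := r%:R.
  have HB : 0 <= 2*x^+2 + 6*x*y - 9*y^+2 + 9*x + 27 by nra.
  have HP : 0 <= (x - 3*y) * (2*x^+2 + 6*x*y - 9*y^+2 + 9*x + 27).
    apply: mulr_ge0 => //; lra.
  lra.
- move=> r h3.
  have H3 : 3 * ((r%:R : rat) + 1) <= a%:R by move: h3; rewrite -(ler_nat rat) natrM natrD.
  have H0 : (0 : rat) <= r%:R by [].
  rewrite p2.
  set x : rat := a%:R; set y : rat := r%:R.
  set k := 3 * (y + 1) - 1.
  have Hk : 2 <= k by rewrite /k; lra.
  have Hk2 : k <= x - 1 by rewrite /k; lra.
  have K1 : 0 <= (x^+2 + 3*x + 6) * (x - 1 - k) by apply: mulr_ge0; nra.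
  have K2 : 0 <= k^+2 by nra.
  have K3 : 0 <= k^+3 by rewrite exprS; apply: mulr_ge0; nra.
  rewrite ltr_pM2r ?invr_gt0 //.
  nra.
Qed.
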